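(* For any two algebras $A,B$ there is a natural isomorphism of pro-algebras $\mathfrak{op}(\mathfrak{M}^{\mathrm{nc}}(A,B))\cong\mathfrak{M}^{\mathrm{nc}}(\mathfrak{op}(A),\mathfrak{op}(B))$.
   Context: Fix a field $\mathbb{F}$; algebras are associative, not necessarily unital or commutative $\mathbb{F}$-algebras, forming the category $\mathbf{A}_{\mathrm{nc}}$; $\otimes=\otimes_{\mathbb{F}}$. Pro-algebras are inverse systems of algebras over directed sets with $\mathrm{Hom}((C_i),(D_j))=\varprojlim_j\varinjlim_i\mathrm{Hom}(C_i,D_j)$; functors and tensor products are applied componentwise. For algebras $A,B$, $\mathfrak{M}^{\mathrm{nc}}(A,B)$ with $\Upsilon_{A,B}:A\to B\otimes\mathfrak{M}^{\mathrm{nc}}(A,B)$ is the (existing, unique up to isomorphism) universal pair: for every pro-algebra $C$ and pro-morphism $\varphi:A\to B\otimes C$ there is a unique $\overline{\varphi}:\mathfrak{M}^{\mathrm{nc}}(A,B)\to C$ with $\varphi=(\mathrm{id}_B\otimes\overline{\varphi})\Upsilon_{A,B}$. $\mathfrak{op}:\mathbf{A}_{\mathrm{nc}}\to\mathbf{A}_{\mathrm{nc}}$ sends an algebra to the algebra with the opposite multiplication. *)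

(* Defs.v *)
From HB Require Import structures.
From mathcomp Require Import all_boot all_order all_algebra.
Unset Printing Implicit Defensive.
Import GRing.Theory.
Local Open Scope ring_scope.

Section NC.
Variable F : fieldType.

Record ncalg := NcAlg {
  nc_carrier :> lmodType F;
  nc_mul : nc_carrier -> nc_carrier -> nc_carrier;
  nc_mulA : forall x y z, nc_mul x (nc_mul y z) = nc_mul (nc_mul x y) z;
  nc_mulDl : forall x y z, nc_mul (x + y) z = nc_mul x z + nc_mul y z;
  nc_mulDr : forall x y z, nc_mul x (y + z) = nc_mul x y + nc_mul x z;
  nc_mulZl : forall (k : F) x y, nc_mul (k *: x) y = k *: nc_mul x y;
  nc_mulZr : forall (k : F) x y, nc_mul x (k *: y) = k *: nc_mul x y }.
Arguments nc_mul {_}.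

Definition is_alg_hom {A B : ncalg} (f : A -> B) :=
  (forall (k : F) x y, f (k *: x + y) = k *: f x + f y) /\
  (forall x y, f (nc_mul x y) = nc_mul (f x) (f y)).

Record alg_hom (A B : ncalg) := AlgHom {
  ah_fun :> A -> B;
  ah_prop : is_alg_hom ah_fun }.
Arguments ah_fun {A B}.
Arguments ah_prop {A B}.
Arguments AlgHom {A B}.

Lemma id_is_alg_hom (A : ncalg) : is_alg_hom (fun x : A => x).
Proof. by split. Qed.
Definition id_hom (A : ncalg) : alg_hom A A := AlgHom _ (id_is_alg_hom A).

Definition op_alg (A : ncalg) : ncalg.
Proof.
refine (@NcAlg (nc_carrier A) (fun x y => nc_mul y x) _ _ _ _ _).
- by move=> x y z; rewrite nc_mulA.
- by move=> x y z; rewrite nc_mulDr.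
- by move=> x y z; rewrite nc_mulDl.
- by move=> k x y; rewrite nc_mulZr.
- by move=> k x y; rewrite nc_mulZl.
Defined.

Lemma op_is_alg_hom (A B : ncalg) (f : alg_hom A B) :
  @is_alg_hom (op_alg A) (op_alg B) (ah_fun f).
Proof. case: f => f [Hl Hm]; split => //= x y; exact: Hm. Qed.
Definition op_hom {A B : ncalg} (f : alg_hom A B) : alg_hom (op_alg A) (op_alg B) :=
  AlgHom _ (op_is_alg_hom A B f).

Record proalg := ProAlg {
  pa_idx : Type;
  pa_le : pa_idx -> pa_idx -> Prop;
  pa_refl : forall i, pa_le i i;
  pa_trans : forall i j k, pa_le i j -> pa_le j k -> pa_le i k;
  pa_inhabited : inhabited pa_idx;
  pa_directed : forall i j, exists k, pa_le i k /\ pa_le j k;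
  pa_obj : pa_idx -> ncalg;
  pa_map : forall i j, pa_le i j -> alg_hom (pa_obj j) (pa_obj i);
  pa_map_id : forall i (h : pa_le i i) x, pa_map i i h x = x;
  pa_map_comp : forall i j k (hij : pa_le i j) (hjk : pa_le j k) (hik : pa_le i k) x,
      pa_map i j hij (pa_map j k hjk x) = pa_map i k hik x }.
Arguments pa_obj : clear implicits.
Arguments pa_le : clear implicits.
Arguments pa_map {_ _ _}.

(* equality of germs in colim_i Hom(C_i, X) (X a type with an equality R) *)
Definition germ_eq {C : proalg} {X : Type} (R : X -> X -> Prop)
    {i : pa_idx C} (f : pa_obj C i -> X) {i' : pa_idx C} (f' : pa_obj C i' -> X) :=
  exists k (hi : pa_le C i k) (hi' : pa_le C i' k),
    forall x, R (f (pa_map hi x)) (f' (pa_map hi' x)).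

(* morphisms of pro-algebras: elements of lim_j colim_i Hom(C_i, D_j),
   given by representatives *)
Record prohom (C D : proalg) := ProHom {
  ph_idx : pa_idx D -> pa_idx C;
  ph_map : forall j, alg_hom (pa_obj C (ph_idx j)) (pa_obj D j);
  ph_compat : forall j j' (h : pa_le D j j'),
      germ_eq (@eq _) (fun x => pa_map h (ph_map j' x)) (fun x => ph_map j x) }.
Arguments ph_idx {C D}.
Arguments ph_map {C D}.

Record rawhom (C D : proalg) := RawHom {
  rh_idx : pa_idx D -> pa_idx C;
  rh_map : forall j, pa_obj C (rh_idx j) -> pa_obj D j }.
Arguments rh_idx {C D}.
Arguments rh_map {C D}.

Definition raw_of {C D : proalg} (f : prohom C D) : rawhom C D :=
  @RawHom C D (ph_idx f) (fun j => ah_fun (ph_map f j)).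

(* equality in lim_j colim_i Hom(C_i, D_j) *)
Definition raw_eq {C D : proalg} (f g : rawhom C D) :=
  forall j, germ_eq (@eq _) (rh_map f j) (rh_map g j).

Definition raw_id (C : proalg) : rawhom C C :=
  @RawHom C C (fun j => j) (fun j x => x).

Definition raw_comp {C D E : proalg} (g : prohom D E) (f : prohom C D) : rawhom C E :=
  @RawHom C E (fun k => ph_idx f (ph_idx g k))
    (fun k x => ph_map g k (ph_map f (ph_idx g k) x)).

Definition ph_eq {C D : proalg} (f g : prohom C D) := raw_eq (raw_of f) (raw_of g).

Definition is_proiso {C D : proalg} (f : prohom C D) :=
  exists g : prohom D C,
    raw_eq (raw_comp g f) (raw_id C) /\ raw_eq (raw_comp f g) (raw_id D).

Definition op_pro (C : proalg) : proalg :=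
  @ProAlg (pa_idx C) (pa_le C) (@pa_refl C) (@pa_trans C) (pa_inhabited C)
    (@pa_directed C) (fun i => op_alg (pa_obj C i))
    (fun i j h => op_hom (pa_map h)) (@pa_map_id C) (@pa_map_comp C).

Definition op_prohom {C D : proalg} (f : prohom C D) : prohom (op_pro C) (op_pro D) :=
  @ProHom (op_pro C) (op_pro D) (ph_idx f) (fun j => op_hom (ph_map f j))
    (@ph_compat C D f).

(* ---------- tensor products B (x) X: an element is a finite sum of pure
   tensors, represented by a list of pairs; two lists represent the same
   tensor iff every bilinear map takes the same value on them. *)
Definition is_bilinear {B X W : lmodType F} (beta : B -> X -> W) :=
  (forall (k : F) b b' x, beta (k *: b + b') x = k *: beta b x + beta b' x) /\
  (forall (k : F) b x x', beta b (k *: x + x') = k *: beta b x + beta b x').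

Definition tensor_eq {B X : lmodType F} (s t : seq (B * X)) :=
  forall (W : lmodType F) (beta : B -> X -> W), is_bilinear beta ->
    \sum_(p <- s) beta p.1 p.2 = \sum_(p <- t) beta p.1 p.2.

Definition tscale {B X : lmodType F} (k : F) (s : seq (B * X)) :=
  [seq (k *: p.1, p.2) | p <- s].

Definition tmul {B X : ncalg} (s t : seq (B * X)) : seq (B * X) :=
  [seq (nc_mul p.1 q.1, nc_mul p.2 q.2) | p <- s, q <- t].

Definition tmap_r {B X Y : Type} (g : X -> Y) (s : seq (B * X)) : seq (B * Y) :=
  [seq (p.1, g p.2) | p <- s].
Definition tmap_l {B B' X : Type} (g : B -> B') (s : seq (B * X)) : seq (B' * X) :=
  [seq (g p.1, p.2) | p <- s].

Definition is_tens_hom {A B X : ncalg} (phi : A -> seq (B * X)) :=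
  (forall (k : F) a a', tensor_eq (phi (k *: a + a')) (tscale k (phi a) ++ phi a')) /\
  (forall a a', tensor_eq (phi (nc_mul a a')) (tmul (phi a) (phi a'))).

(* pro-morphisms A -> B (x) C, for an algebra A (a constant pro-algebra) and
   B (x) C = (B (x) C_j)_j *)
Record tprohom (A B : ncalg) (C : proalg) := TProHom {
  tp_map : forall j, A -> seq (B * pa_obj C j);
  tp_hom : forall j, is_tens_hom (tp_map j);
  tp_compat : forall j j' (h : pa_le C j j') a,
      tensor_eq (tmap_r (pa_map h) (tp_map j' a)) (tp_map j a) }.
Arguments tp_map {A B C}.

Definition factors {A B : ncalg} {M C : proalg} (U : tprohom A B M)
    (psi : prohom M C) (phi : tprohom A B C) :=
  forall j a, tensor_eq (tmap_r (ph_map psi j) (tp_map U (ph_idx psi j) a))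
                        (tp_map phi j a).

Definition is_universal_measuring {A B : ncalg} {M : proalg} (U : tprohom A B M) :=
  forall (C : proalg) (phi : tprohom A B C),
    (exists psi : prohom M C, factors U psi phi) /\
    (forall psi psi' : prohom M C, factors U psi phi -> factors U psi' phi ->
       ph_eq psi psi').

Definition induced_map {A A' B B' : ncalg} {M M' : proalg}
    (U : tprohom A B M) (U' : tprohom A' B' M')
    (f : alg_hom A' A) (g : alg_hom B B') (chi : prohom M' M) :=
  forall j a', tensor_eq (tmap_r (ph_map chi j) (tp_map U' (ph_idx chi j) a'))
                         (tmap_l g (tp_map U j (f a'))).

End NC.
Arguments alg_hom {F}.
Arguments id_hom {F}.
Arguments op_alg {F}.
Arguments op_hom {F A B}.
Arguments prohom {F}.
Arguments rawhom {F}.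
Arguments raw_of {F C D}.
Arguments raw_eq {F C D}.
Arguments raw_id {F}.
Arguments raw_comp {F C D E}.
Arguments ph_eq {F C D}.
Arguments is_proiso {F C D}.
Arguments op_pro {F}.
Arguments op_prohom {F C D}.
Arguments tprohom {F}.
Arguments factors {F A B M C}.
Arguments is_universal_measuring {F A B M}.
Arguments induced_map {F A A' B B' M M'}.
Arguments tensor_eq {F B X}.

(* Main.v *)
Require Import Defs.
From mathcomp Require Import all_boot all_order all_algebra.
From Stdlib Require Import ClassicalEpsilon.
Set Implicit Arguments. Unset Strict Implicit.
Unset Printing Implicit Defensive.
Import GRing.Theory.
Local Open Scope ring_scope.

Arguments pa_refl {F p}. Arguments pa_trans {F p i j k}. Arguments pa_map {F p i j}.
Arguments pa_map_comp {F p i j k}. Arguments pa_map_id {F p i}. Arguments pa_directed {F p}.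
Arguments ph_idx {F C D}. Arguments ph_map {F C D}. Arguments ph_compat {F C D} p {j j'}.
Arguments tp_map {F A B C}. Arguments tp_compat {F A B C} t {j j'}. Arguments tp_hom {F A B C}.
Arguments germ_eq {F C X} R {i} f {i'} f'. Arguments AlgHom {F A B}. Arguments ah_prop {F A B}.
Arguments is_alg_hom {F A B}. Arguments tmul {F B X}. Arguments tscale {F B X}.
Arguments is_tens_hom {F A B X}. Arguments nc_mul {F n}. Arguments ProHom {F C D}.
Arguments TProHom {F A B C}. Arguments ah_fun {F A B}.

Section Aux.
Variable F : fieldType.

Lemma teq_refl (B X : lmodType F) (s : seq (B * X)) : tensor_eq s s.
Proof. by []. Qed.
Lemma teq_sym (B X : lmodType F) (s t : seq (B * X)) : tensor_eq s t -> tensor_eq t s.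
Proof. by move=> H W b hb; rewrite H. Qed.
Lemma teq_trans (B X : lmodType F) (s t u : seq (B * X)) :
  tensor_eq s t -> tensor_eq t u -> tensor_eq s u.
Proof. by move=> H1 H2 W b hb; rewrite H1 // H2. Qed.

Lemma teq_map_r (B X Y : lmodType F) (g : X -> Y)
  (hg : forall (k : F) x y, g (k *: x + y) = k *: g x + g y) (s t : seq (B * X)) :
  tensor_eq s t -> tensor_eq (tmap_r g s) (tmap_r g t).
Proof.
move=> H W beta [H1 H2]; rewrite /tmap_r !big_map /=.
apply: (H W (fun b x => beta b (g x))); split=> k b b' x //.
by rewrite hg H2.
Qed.

Lemma teq_map_l (B B' X : lmodType F) (g : B -> B')
  (hg : forall (k : F) x y, g (k *: x + y) = k *: g x + g y) (s t : seq (B * X)) :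
  tensor_eq s t -> tensor_eq (tmap_l g s) (tmap_l g t).
Proof.
move=> H W beta [H1 H2]; rewrite /tmap_l !big_map /=.
apply: (H W (fun b x => beta (g b) x)); split=> k b b' x //.
by rewrite hg H1.
Qed.

Lemma tmap_r_comp (B X Y Z : Type) (f : X -> Y) (g : Y -> Z) (s : seq (B * X)) :
  tmap_r g (tmap_r f s) = tmap_r (fun x => g (f x)) s.
Proof. by rewrite /tmap_r -map_comp. Qed.

Lemma tmap_lr (B B' X Y : Type) (f : X -> Y) (g : B -> B') (s : seq (B * X)) :
  tmap_l g (tmap_r f s) = tmap_r f (tmap_l g s).
Proof. by rewrite /tmap_l /tmap_r -!map_comp. Qed.

Lemma tmap_r_id (B X : Type) (s : seq (B * X)) : tmap_r (fun x => x) s = s.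
Proof. by elim: s => [|[b x] s IH] //=; rewrite IH. Qed.

Lemma tmap_r_ext (B X Y : Type) (f g : X -> Y) (s : seq (B * X)) :
  (forall x, f x = g x) -> tmap_r f s = tmap_r g s.
Proof. by move=> H; apply: eq_map => p; rewrite H. Qed.

Lemma tmul_swap (B X : lmodType F) (mB : B -> B -> B) (mX : X -> X -> X)
  (s t : seq (B * X)) :
  tensor_eq [seq (mB p.1 q.1, mX p.2 q.2) | p <- s, q <- t]
            [seq (mB q.1 p.1, mX q.2 p.2) | p <- t, q <- s].
Proof.
move=> W beta _.
rewrite !big_allpairs_dep /=.
exact: exchange_big.
Qed.

End Aux.
Section Pro.
Variable F : fieldType.

Lemma pa_map_pi (C : proalg F) i k (p q : pa_le _ C i k) x : pa_map p x = pa_map q x.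
Proof. by rewrite -(pa_map_comp p (pa_refl k) q) pa_map_id. Qed.

Lemma comp_is_alg_hom (X Y Z : ncalg F) (g : alg_hom Y Z) (f : alg_hom X Y) :
  is_alg_hom (fun x => g (f x)).
Proof.
case: g => g [Hg1 Hg2]; case: f => f [Hf1 Hf2]; split => /=.
  by move=> k x y; rewrite Hf1 Hg1.
by move=> x y; rewrite Hf2 Hg2.
Qed.
Definition comp_hom (X Y Z : ncalg F) (g : alg_hom Y Z) (f : alg_hom X Y) : alg_hom X Z :=
  AlgHom _ (comp_is_alg_hom g f).

Lemma comp_compat (C D E : proalg F) (g : prohom D E) (f : prohom C D) k k'
  (h : pa_le _ E k k') :
  germ_eq (@eq _)
    (fun x => pa_map h (comp_hom (ph_map g k') (ph_map f (ph_idx g k')) x))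
    (fun x => comp_hom (ph_map g k) (ph_map f (ph_idx g k)) x).
Proof.
case: (ph_compat g h) => l [hl [hl' Hg]].
case: (ph_compat f hl) => m1 [ha [hb Hf1]].
case: (ph_compat f hl') => m2 [hc [hd Hf2]].
case: (pa_directed m1 m2) => m [e1 e2].
exists m, (pa_trans hb e1), (pa_trans hd e2) => x /=.
rewrite -(pa_map_comp hb e1) -(pa_map_comp hd e2) -Hf1 -Hf2 Hg.
rewrite (pa_map_comp ha e1 (pa_trans ha e1)) (pa_map_comp hc e2 (pa_trans hc e2)).
by rewrite (pa_map_pi (pa_trans ha e1) (pa_trans hc e2)).
Qed.

Definition comp_pro (C D E : proalg F) (g : prohom D E) (f : prohom C D) : prohom C E :=
  @ProHom F C E (fun k => ph_idx f (ph_idx g k))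
    (fun k => comp_hom (ph_map g k) (ph_map f (ph_idx g k))) (comp_compat g f).

Lemma id_compat (C : proalg F) j j' (h : pa_le _ C j j') :
  germ_eq (@eq _) (fun x => pa_map h (id_hom (pa_obj _ C j') x))
    (fun x => id_hom (pa_obj _ C j) x).
Proof. by exists j', (pa_refl j'), h => x /=; rewrite pa_map_id. Qed.

Definition id_pro (C : proalg F) : prohom C C :=
  @ProHom F C C (fun j => j) (fun j => id_hom (pa_obj _ C j)) (@id_compat C).

Lemma unop_is_alg_hom (X Y : ncalg F) (f : alg_hom X (op_alg Y)) :
  @is_alg_hom F (op_alg X) Y (ah_fun f).
Proof. case: f => f [Hl Hm]; split => //= x y; exact: Hm. Qed.
Definition unop_hom (X Y : ncalg F) (f : alg_hom X (op_alg Y)) : alg_hom (op_alg X) Y :=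
  AlgHom _ (unop_is_alg_hom f).

Definition unop_pro (C D : proalg F) (p : prohom C (op_pro D)) : prohom (op_pro C) D :=
  @ProHom F (op_pro C) D (ph_idx p) (fun j => unop_hom (ph_map p j)) (fun j j' h => @ph_compat _ _ _ p j j' h).

End Pro.
Section Push.
Variable F : fieldType.

Lemma hom_lin (X Y : ncalg F) (f : alg_hom X Y) :
  forall (k : F) x y, f (k *: x + y) = k *: f x + f y.
Proof. exact: (ah_prop f).1. Qed.

Lemma tmap_r_tscale (B X Y : lmodType F) (g : X -> Y) k (s : seq (B * X)) :
  tmap_r g (tscale k s) = tscale k (tmap_r g s).
Proof. by rewrite /tmap_r /tscale -!map_comp. Qed.

Lemma tmap_r_tmul (B X Y : ncalg F) (g : alg_hom X Y) (s t : seq (B * X)) :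
  tmap_r g (tmul s t) = tmul (tmap_r g s) (tmap_r g t).
Proof.
have Hm := (ah_prop g).2.
rewrite /tmul /tmap_r; elim: s => //= x s IH; rewrite map_cat IH -!map_comp.
by congr (_ ++ _); apply: eq_map => q /=; rewrite Hm.
Qed.

Section PushDef.
Variables (A B : ncalg F) (M C : proalg F) (U : tprohom A B M) (p : prohom M C).

Definition push_map j a := tmap_r (ph_map p j) (tp_map U (ph_idx p j) a).

Lemma push_hom j : is_tens_hom (push_map j).
Proof.
have [H1 H2] := tp_hom U (ph_idx p j); split.
  move=> k a a'; rewrite /push_map -tmap_r_tscale /tmap_r -map_cat.
  by apply: teq_map_r; [exact: hom_lin | exact: H1].
move=> a a'; rewrite /push_map -tmap_r_tmul.
by apply: teq_map_r; [exact: hom_lin | exact: H2].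
Qed.

Lemma push_compat j j' (h : pa_le _ C j j') a :
  tensor_eq (tmap_r (pa_map h) (push_map j' a)) (push_map j a).
Proof.
rewrite /push_map.
case: (ph_compat p h) => m [hi [hi' Hc]].
apply: (@teq_trans _ _ _ _ (tmap_r (pa_map h) (tmap_r (ph_map p j')
           (tmap_r (pa_map hi) (tp_map U m a))))).
  apply: teq_map_r; first exact: hom_lin.
  apply: teq_map_r; first exact: hom_lin.
  apply: teq_sym; exact: tp_compat.
rewrite !tmap_r_comp (@tmap_r_ext _ _ _ _ (fun x => ph_map p j (pa_map hi' x))).
  rewrite -(tmap_r_comp (pa_map hi') (ph_map p j)).
  apply: teq_map_r; first exact: hom_lin.
  exact: tp_compat.
by move=> x; exact: Hc.
Qed.

Definition push : tprohom A B C := TProHom push_map push_hom push_compat.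

Lemma push_factors : factors U p push.
Proof. by move=> j a; exact: teq_refl. Qed.
End PushDef.

Section OpT.
Variables (A B : ncalg F) (C : proalg F).

Definition opT1 (T : tprohom A B C) : tprohom (op_alg A) (op_alg B) (op_pro C).
Proof.
refine (@TProHom F (op_alg A) (op_alg B) (op_pro C) (fun j a => tp_map T j a) _ _).
- move=> j; have [H1 H2] := tp_hom T j; split.
    exact: H1.
  move=> a a'; apply: teq_trans (H2 a' a) _.
  exact (tmul_swap (@nc_mul _ B) (@nc_mul _ (pa_obj _ C j)) (tp_map T j a') (tp_map T j a)).
- move=> j j' h a; exact: (tp_compat T h a).
Defined.

Definition opT2 (T : tprohom (op_alg A) (op_alg B) C) : tprohom A B (op_pro C).
Proof.
refine (@TProHom F A B (op_pro C) (fun j a => tp_map T j a) _ _).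
- move=> j; have [H1 H2] := tp_hom T j; split.
    exact: H1.
  move=> a a'; apply: teq_trans (H2 a' a) _.
  exact (tmul_swap (@nc_mul _ (op_alg B)) (@nc_mul _ (pa_obj _ C j)) (tp_map T j a') (tp_map T j a)).
- move=> j j' h a; exact: (tp_compat T h a).
Defined.
End OpT.
End Push.
Lemma tmap_r_comp_hom (F : fieldType) (B : Type) (X Y Z : ncalg F)
  (g : alg_hom Y Z) (f : alg_hom X Y) (s : seq (B * X)) :
  tmap_r (comp_hom g f) s = tmap_r g (tmap_r f s).
Proof. by rewrite tmap_r_comp. Qed.

Theorem mainTheorem5 (F : fieldType)
  (Mnc : ncalg F -> ncalg F -> proalg F)
  (Ups : forall A B : ncalg F, tprohom A B (Mnc A B))
  (Huniv : forall A B : ncalg F, is_universal_measuring (Ups A B)) :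
  exists theta : forall A B : ncalg F,
      prohom (op_pro (Mnc A B)) (Mnc (op_alg A) (op_alg B)),
    (forall A B : ncalg F, is_proiso (theta A B)) /\
    (forall (A A' B B' : ncalg F) (f : alg_hom A' A) (g : alg_hom B B')
            (chi : prohom (Mnc A' B') (Mnc A B))
            (chi' : prohom (Mnc (op_alg A') (op_alg B')) (Mnc (op_alg A) (op_alg B))),
       induced_map (Ups A B) (Ups A' B') f g chi ->
       induced_map (Ups (op_alg A) (op_alg B)) (Ups (op_alg A') (op_alg B'))
                   (op_hom f) (op_hom g) chi' ->
       raw_eq (raw_comp chi' (theta A' B')) (raw_comp (theta A B) (op_prohom chi))).
Proof.
pose W1 A B := opT1 (Ups A B).
pose W2 A B := opT2 (Ups (op_alg A) (op_alg B)).
have Epsi : forall A B, {psi : prohom (Mnc A B) (op_pro (Mnc (op_alg A) (op_alg B)))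
                          | factors (Ups A B) psi (W2 A B)}.
  move=> A B; apply: constructive_indefinite_description.
  exact: (Huniv A B _ (W2 A B)).1.
have Ephi : forall A B, {phi : prohom (Mnc (op_alg A) (op_alg B)) (op_pro (Mnc A B))
                          | factors (Ups (op_alg A) (op_alg B)) phi (W1 A B)}.
  move=> A B; apply: constructive_indefinite_description.
  exact: (Huniv (op_alg A) (op_alg B) _ (W1 A B)).1.
exists (fun A B => unop_pro (sval (Epsi A B))).
split.
  move=> A B; case: (Epsi A B) => psi Hpsi; case: (Ephi A B) => phi Hphi /=.
  exists phi; split.
    have H := (Huniv A B _ (Ups A B)).2 (comp_pro (unop_pro phi) psi) (id_pro _).
    apply: H.
      move=> k a /=; rewrite -(tmap_r_comp (ph_map psi _) (ph_map phi k)).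
      apply: (@teq_trans _ _ _ _ (tmap_r (ph_map phi k) (tp_map (W2 A B) (ph_idx phi k) a))).
        by apply: teq_map_r; [exact (hom_lin (ph_map phi k)) | exact: Hpsi].
      exact: Hphi.
    move=> k a /=; rewrite tmap_r_id; exact: teq_refl.
  have H := (Huniv (op_alg A) (op_alg B) _ (Ups (op_alg A) (op_alg B))).2
              (comp_pro (unop_pro psi) phi) (id_pro _).
  apply: H.
    move=> k a /=; rewrite -(tmap_r_comp (ph_map phi _) (ph_map psi k)).
    apply: (@teq_trans _ _ _ _ (tmap_r (ph_map psi k) (tp_map (W1 A B) (ph_idx psi k) a))).
      by apply: teq_map_r; [exact (hom_lin (ph_map psi k)) | exact: Hphi].
    exact: Hpsi.
  move=> k a /=; rewrite tmap_r_id; exact: teq_refl.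
move=> A A' B B' f g chi chi' Hchi Hchi'.
case: (Epsi A B) => psi Hpsi; case: (Epsi A' B') => psi' Hpsi' /=.
pose L := comp_pro (op_prohom chi') psi'.
have H := (Huniv A' B' _ (push (Ups A' B') L)).2 L (comp_pro psi chi) (push_factors _ _).
apply: H.
move=> k a /=; rewrite -(tmap_r_comp (ph_map chi _) (ph_map psi k)).
apply: (@teq_trans _ _ _ _ (tmap_r (ph_map psi k) (tmap_l g (tp_map (Ups A B) (ph_idx psi k) (f a))))).
  by apply: teq_map_r; [exact (hom_lin (ph_map psi k)) | exact: Hchi].
rewrite -tmap_lr.
apply: (@teq_trans _ _ _ _ (tmap_l g (tp_map (W2 A B) k (f a)))).
  by apply: teq_map_l; [exact (hom_lin g) | exact: Hpsi].
rewrite /push_map /= -(tmap_r_comp (ph_map psi' _) (ph_map chi' k)).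
apply: teq_sym.
apply: (@teq_trans _ _ _ _ (tmap_r (ph_map chi' k) (tp_map (W2 A' B') (ph_idx chi' k) a))).
  by apply: teq_map_r; [exact (hom_lin (ph_map chi' k)) | exact: Hpsi'].
exact: Hchi'.
Qed.
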